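(* Let $\tau$, $K$, $X$, $Q$, $\mu_0$, $f$, $\omega$, $Z_{N,\beta,h,\omega}$, $A(b,\beta,h)$ and $\lambda(b,\beta,h)$ be as in the context. Then for all $h\in\mathbb{R}$ and $\beta\ge 0$, $$\frac1N\log \mathbb{E}Z_{N,\beta,h,\omega}\xrightarrow[N\to\infty]{} F^a(\beta,h)\ge 0,$$ where $F^a(\beta,h)$ is the (unique) solution $b>0$ of the equation $\lambda(b,\beta,h)=1$ if $\lambda(0,\beta,h)>1$, and $F^a(\beta,h)=0$ otherwise. Moreover the annealed critical point is $$h_c^a(\beta):=\sup\{h\in\mathbb{R}: F^a(\beta,h)=0\}=-\log\lambda(0,\beta,0).$$
   Context: Let $\tau=(\tau_n)_{n\ge0}$ be a discrete renewal process on $\{0,1,2,\dots\}$ with $\tau_0=0$ and i.i.d. interarrival times with law $K(n):=P(\tau_1=n)=L(n)n^{-(1+\alpha)}$ for $n\ge1$, where $\alpha\ge0$ and $L:\mathbb{N}\to(0,\infty)$ is slowly varying; assume $\sum_{n\ge1}K(n)=1$. Write $\delta_n=\mathbf 1_{\{n\in\tau\}}$ where $\{n\in\tau\}=\bigcup_{k\ge0}\{\tau_k=n\}$, and $E$ for expectation w.r.t. the law $P$ of $\tau$. For a real sequence $\omega=(\omega_n)_{n\ge0}$ independent of $\tau$, $\beta\ge0$, $h\in\mathbb{R}$, define the partition function $Z_{N,\beta,h,\omega}=E\big[\exp\big(\sum_{n=1}^N(\beta\omega_n+h)\delta_n\big)\delta_N\big]$. Let $X=(X_n)_{n\ge0}$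 be a homogeneous irreducible Markov chain on a finite state space $\Sigma$ with transition matrix $Q$, started from its invariant distribution $\mu_0$; let $f:\Sigma\to\mathbb{R}$ with $\sum_x\mu_0(x)f(x)=0$, and set $\omega_n=f(X_n)$. $\mathbb{E}$ denotes expectation with respect to the law of $X$. For $t\ge1$ define the $\Sigma\times\Sigma$ matrix $M(t,\beta,h)(x,y)=K(t)Q^t(x,y)e^{\beta f(y)+h}$, and for $b\ge0$, $A(b,\beta,h)=\sum_{t\ge1}M(t,\beta,h)e^{-bt}$ (a matrix with positive entries); $\lambda(b,\beta,h)$ denotes its Perron–Frobenius eigenvalue. *)

(* Defs.v *)
From Stdlib Require Import Reals List Arith ZArith.
Import ListNotations.
Open Scope R_scope.

(* States of the finite chain: Sigma = {0, ..., d-1} (as nat). *)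

Fixpoint fsum (d : nat) (g : nat -> R) : R :=
  match d with O => 0 | S d' => fsum d' g + g d' end.

Definition lsum {A : Type} (l : list A) (g : A -> R) : R :=
  fold_right (fun a s => g a + s) 0 l.
Definition lprod (l : list R) : R := fold_right Rmult 1 l.

Fixpoint mpow (d : nat) (Q : nat -> nat -> R) (n : nat) : nat -> nat -> R :=
  match n with
  | O => fun i j => if Nat.eqb i j then 1 else 0
  | S n' => fun i j => fsum d (fun k => mpow d Q n' i k * Q k j)
  end.

Definition slowly_varying (L : nat -> R) : Prop :=
  forall c : R, 0 < c ->
    Un_cv (fun n => L (Z.to_nat (Int_part (c * INR n))) / L n) 1.

Definition stochastic (d : nat) (Q : nat -> nat -> R) : Prop :=
  (forall x y, (x < d)%nat -> (y < d)%nat -> 0 <= Q x y) /\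
  (forall x, (x < d)%nat -> fsum d (fun y => Q x y) = 1).

Definition irreducible (d : nat) (Q : nat -> nat -> R) : Prop :=
  forall x y, (x < d)%nat -> (y < d)%nat -> exists n, 0 < mpow d Q n x y.

Definition invariant_distribution (d : nat) (Q : nat -> nat -> R) (mu0 : nat -> R) : Prop :=
  (forall x, (x < d)%nat -> 0 <= mu0 x) /\
  fsum d mu0 = 1 /\
  (forall y, (y < d)%nat -> fsum d (fun x => mu0 x * Q x y) = mu0 y).

(* compositions of n into positive parts = possible interarrival sequences
   (tau_1, tau_2 - tau_1, ..., tau_k - tau_{k-1}) with tau_k = n  *)
Fixpoint comps (fuel n : nat) : list (list nat) :=
  match n with
  | O => [ [] ]
  | S _ => match fuel with
           | O => []
           | S f => flat_map (fun t => map (cons t) (comps f (n - t))) (seq 1 n)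
           end
  end.
Definition compositions (n : nat) : list (list nat) := comps n n.

(* renewal epochs tau_1 < ... < tau_k from interarrival times *)
Fixpoint psums (acc : nat) (c : list nat) : list nat :=
  match c with [] => [] | t :: c' => (acc + t)%nat :: psums (acc + t) c' end.

Fixpoint paths (d n : nat) : list (list nat) :=
  match n with
  | O => [ [] ]
  | S n' => flat_map (fun i => map (cons i) (paths d n')) (seq 0 d)
  end.

Fixpoint chain_w (Q : nat -> nat -> R) (p : list nat) : R :=
  match p with
  | x :: ((y :: _) as p') => Q x y * chain_w Q p'
  | _ => 1
  end.

(* Markov chain expectation: E[G(X_0..X_N)] for X started from mu0 *)
Definition EX (d : nat) (Q : nat -> nat -> R) (mu0 : nat -> R) (N : nat)
  (G : (nat -> nat) -> R) : R :=
  lsum (paths d (S N))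
    (fun p => mu0 (nth 0 p 0%nat) * chain_w Q p * G (fun n => nth n p 0%nat)).

(* Annealed partition function  E E[ exp(sum_{n=1}^N (beta f(X_n) + h) delta_n) delta_N ]:
   expectation over the i.i.d. interarrival times (law K) on the event {N in tau},
   and over the Markov chain X (independent of tau), with omega_n = f(X_n). *)
Definition annealedZ (K : nat -> R) (d : nat) (Q : nat -> nat -> R) (mu0 f : nat -> R)
  (beta h : R) (N : nat) : R :=
  lsum (compositions N) (fun c =>
    lprod (map K c) *
    EX d Q mu0 N (fun X => exp (lsum (psums 0 c) (fun n => beta * f (X n) + h)))).

Definition A_entry (K : nat -> R) (d : nat) (Q : nat -> nat -> R) (f : nat -> R)
  (b beta h : R) (x y : nat) (a : R) : Prop :=
  infinite_sum
    (fun n => K (S n) * mpow d Q (S n) x y * exp (beta * f y + h) * exp (- b * INR (S n))) a.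

(* lam is the Perron-Frobenius eigenvalue of the positive matrix A(b,beta,h):
   the (positive) eigenvalue admitting an eigenvector with positive entries *)
Definition PF_eigenvalue (K : nat -> R) (d : nat) (Q : nat -> nat -> R) (f : nat -> R)
  (b beta h lam : R) : Prop :=
  0 < lam /\
  exists (A : nat -> nat -> R) (v : nat -> R),
    (forall x y, (x < d)%nat -> (y < d)%nat -> A_entry K d Q f b beta h x y (A x y)) /\
    (forall x, (x < d)%nat -> 0 < v x) /\
    (forall x, (x < d)%nat -> fsum d (fun y => A x y * v y) = lam * v x).

(* Main.v *)
Require Import Defs.
From Stdlib Require Import Reals List Arith ZArith.
From Stdlib Require Import Lra Lia ClassicalEpsilon.
Import ListNotations.
Open Scope R_scope.

Lemma fsum_ext d g1 g2 : (forall i, (i < d)%nat -> g1 i = g2 i) -> fsum d g1 = fsum d g2.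
Proof. induction d; simpl; intros; auto. rewrite IHd by (intros; apply H; lia). rewrite H by lia; auto. Qed.

Lemma fsum_plus d g1 g2 : fsum d (fun i => g1 i + g2 i) = fsum d g1 + fsum d g2.
Proof. induction d; simpl; [lra|]. rewrite IHd; lra. Qed.

Lemma fsum_scal d c g : fsum d (fun i => c * g i) = c * fsum d g.
Proof. induction d; simpl; [lra|]. rewrite IHd; lra. Qed.

Lemma fsum_le d g1 g2 : (forall i, (i < d)%nat -> g1 i <= g2 i) -> fsum d g1 <= fsum d g2.
Proof. induction d; simpl; intros; [lra|]. assert (g1 d <= g2 d) by (apply H; lia).
 assert (fsum d g1 <= fsum d g2) by (apply IHd; intros; apply H; lia). lra. Qed.

Lemma fsum_nonneg d g : (forall i, (i < d)%nat -> 0 <= g i) -> 0 <= fsum d g.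
Proof. intros. replace 0 with (fsum d (fun _ => 0)). apply fsum_le; auto.
 induction d; simpl; auto. rewrite IHd; [lra|intros; apply H; lia]. Qed.

Lemma fsum_zero d : fsum d (fun _ => 0) = 0.
Proof. induction d; simpl; auto. rewrite IHd; lra. Qed.

Lemma fsum_ge_term d g i : (forall j, (j < d)%nat -> 0 <= g j) -> (i < d)%nat -> g i <= fsum d g.
Proof. induction d; simpl; intros; [lia|]. destruct (Nat.eq_dec i d).
 - subst. assert (0 <= fsum d g) by (apply fsum_nonneg; intros; apply H; lia). lra.
 - assert (g i <= fsum d g) by (apply IHd; [intros; apply H; lia| lia]). assert (0 <= g d) by (apply H; lia). lra. Qed.

Lemma fsum_comm d e (g : nat -> nat -> R) :
  fsum d (fun i => fsum e (fun j => g i j)) = fsum e (fun j => fsum d (fun i => g i j)).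
Proof. induction d; simpl. - rewrite fsum_zero; auto.
 - rewrite IHd. rewrite <- fsum_plus. auto. Qed.

Lemma fsum_delta_l d x a : (x < d)%nat ->
  fsum d (fun k => (if Nat.eqb x k then 1 else 0) * a k) = a x.
Proof. induction d; simpl; intros; [lia|]. destruct (Nat.eq_dec x d).
 - subst. rewrite Nat.eqb_refl. rewrite (fsum_ext _ _ (fun _ => 0)). rewrite fsum_zero; lra.
   intros. destruct (Nat.eqb_spec d i); [lia| lra].
 - rewrite IHd by lia. destruct (Nat.eqb_spec x d); [lia|lra]. Qed.

Lemma fsum_delta_r d y a : (y < d)%nat ->
  fsum d (fun k => a k * (if Nat.eqb k y then 1 else 0)) = a y.
Proof. intros. rewrite <- (fsum_delta_l d y a) by auto. apply fsum_ext; intros.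
 destruct (Nat.eqb_spec i y), (Nat.eqb_spec y i); subst; try lia; try lra. Qed.

Lemma lsum_nil {A} (g : A -> R) : lsum [] g = 0. Proof. reflexivity. Qed.
Lemma lsum_cons {A} a l (g : A -> R) : lsum (a :: l) g = g a + lsum l g. Proof. reflexivity. Qed.

Lemma lsum_app {A} (l1 l2 : list A) g : lsum (l1 ++ l2) g = lsum l1 g + lsum l2 g.
Proof. induction l1; simpl; [lra|]. unfold lsum in *; simpl. rewrite IHl1; lra. Qed.

Lemma lsum_ext_in {A} (l : list A) g1 g2 : (forall a, In a l -> g1 a = g2 a) -> lsum l g1 = lsum l g2.
Proof. induction l; simpl; intros; auto. unfold lsum in *; simpl. rewrite H by auto. rewrite IHl; auto. Qed.

Lemma lsum_map {A B} (f : A -> B) l g : lsum (map f l) g = lsum l (fun a => g (f a)).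
Proof. induction l; simpl; auto. unfold lsum in *; simpl. rewrite IHl; auto. Qed.

Lemma lsum_flat_map {A B} (f : A -> list B) l g : lsum (flat_map f l) g = lsum l (fun a => lsum (f a) g).
Proof. induction l; simpl; auto. rewrite lsum_app, IHl. reflexivity. Qed.

Lemma lsum_scal {A} (l : list A) c g : lsum l (fun a => c * g a) = c * lsum l g.
Proof. induction l; unfold lsum in *; simpl; [lra|]. rewrite IHl; lra. Qed.

Lemma lsum_plus {A} (l : list A) g1 g2 : lsum l (fun a => g1 a + g2 a) = lsum l g1 + lsum l g2.
Proof. induction l; unfold lsum in *; simpl; [lra|]. rewrite IHl; lra. Qed.

Lemma lsum_le {A} (l : list A) g1 g2 : (forall a, In a l -> g1 a <= g2 a) -> lsum l g1 <= lsum l g2.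
Proof. induction l; unfold lsum in *; simpl; intros; [lra|].
 assert (g1 a <= g2 a) by auto. assert (fold_right (fun a s => g1 a + s) 0 l <= fold_right (fun a s => g2 a + s) 0 l) by auto. lra. Qed.

Lemma lsum_nonneg {A} (l : list A) g : (forall a, In a l -> 0 <= g a) -> 0 <= lsum l g.
Proof. intros. replace 0 with (lsum l (fun _ => 0)). apply lsum_le; auto.
 clear H; induction l; unfold lsum in *; simpl; auto. rewrite IHl; lra. Qed.

Lemma lsum_fsum {A} (l : list A) d (g : A -> nat -> R) :
  lsum l (fun a => fsum d (fun i => g a i)) = fsum d (fun i => lsum l (fun a => g a i)).
Proof. induction l; unfold lsum in *; simpl. - rewrite fsum_zero; auto.
 - rewrite IHl. rewrite <- fsum_plus. auto. Qed.

Lemma fsum_seq d g : fsum d g = lsum (seq 0 d) g.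
Proof. induction d; [reflexivity|]. cbn [fsum]. rewrite seq_S, lsum_app, IHd. unfold lsum; simpl. lra. Qed.

Lemma lsum_seq_sumf s n g : lsum (seq s (S n)) g = sum_f_R0 (fun k => g (s + k)%nat) n.
Proof. induction n. - simpl. unfold lsum; simpl. rewrite Nat.add_0_r; lra.
 - rewrite seq_S, lsum_app, IHn. cbn [sum_f_R0]. unfold lsum; simpl. lra. Qed.

Lemma argmax d (g : nat -> R) : (0 < d)%nat -> exists i, (i < d)%nat /\ forall j, (j < d)%nat -> g j <= g i.
Proof. induction d; intros; [lia|]. destruct d. exists 0%nat; split; [lia|]; intros; replace j with 0%nat by lia; lra.
 destruct IHd as [i [Hi H1]]; [lia|]. destruct (Rle_dec (g (S d)) (g i)).
 - exists i; split; [lia|]. intros. destruct (Nat.eq_dec j (S d)); [subst; auto| apply H1; lia].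
 - exists (S d); split; [lia|]. intros. destruct (Nat.eq_dec j (S d)); [subst; lra|].
   assert (g j <= g i) by (apply H1; lia). lra. Qed.

Lemma argmin d (g : nat -> R) : (0 < d)%nat -> exists i, (i < d)%nat /\ forall j, (j < d)%nat -> g i <= g j.
Proof. intros. destruct (argmax d (fun i => - g i) H) as [i [Hi H1]]. exists i; split; auto.
 intros. specialize (H1 j H0). lra. Qed.

Lemma fsum_cv d (u : nat -> nat -> R) (l : nat -> R) :
  (forall i, (i < d)%nat -> Un_cv (u i) (l i)) -> Un_cv (fun n => fsum d (fun i => u i n)) (fsum d l).
Proof. induction d; simpl; intros.
 - intros e He; exists 0%nat; intros; unfold Rdist; rewrite Rminus_diag, Rabs_R0; lra.
 - apply CV_plus. apply IHd; intros; apply H; lia. apply H; lia. Qed.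

Lemma fin_eventually d (P : nat -> nat -> Prop) :
  (forall i, (i < d)%nat -> exists N, forall n, (n >= N)%nat -> P i n) ->
  exists N, forall i, (i < d)%nat -> forall n, (n >= N)%nat -> P i n.
Proof. induction d; intros. exists 0%nat; intros; lia.
 destruct IHd as [N1 H1]. intros; apply H; lia. destruct (H d) as [N2 H2]; [lia|].
 exists (max N1 N2); intros. destruct (Nat.eq_dec i d). subst; apply H2; lia. apply H1; lia. Qed.

Section Mpow.
Variable d : nat.
Variable Q : nat -> nat -> R.
Hypothesis HQ : stochastic d Q.

Lemma mpow_nonneg n x y : (y < d)%nat -> 0 <= mpow d Q n x y.
Proof. destruct HQ as [H0 _]. revert x y; induction n; intros; simpl.
 destruct (Nat.eqb x y); lra.
 apply fsum_nonneg; intros. apply Rmult_le_pos; auto. Qed.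

Lemma mpow_rowsum n x : (x < d)%nat -> fsum d (fun y => mpow d Q n x y) = 1.
Proof. destruct HQ as [H0 H1]. intros Hx; induction n; simpl.
 - rewrite (fsum_ext _ _ (fun y => (if Nat.eqb x y then 1 else 0) * 1)) by (intros; lra).
   apply fsum_delta_l with (a := fun _ => 1); auto.
 - rewrite fsum_comm. rewrite <- IHn. apply fsum_ext; intros.
   rewrite fsum_scal, H1 by auto. lra. Qed.

Lemma mpow_le1 n x y : (x < d)%nat -> (y < d)%nat -> mpow d Q n x y <= 1.
Proof. intros. rewrite <- (mpow_rowsum n x) by auto. apply fsum_ge_term with (g := fun y => mpow d Q n x y); auto.
 intros; apply mpow_nonneg; auto. Qed.

Lemma mpow_S_left n x y : (x < d)%nat -> (y < d)%nat ->
  mpow d Q (S n) x y = fsum d (fun k => Q x k * mpow d Q n k y).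
Proof. intros Hx Hy. revert y Hy. induction n; intros.
 - simpl. rewrite fsum_delta_l by auto. rewrite fsum_delta_r by auto. auto.
 - change (mpow d Q (S (S n)) x y) with (fsum d (fun k => mpow d Q (S n) x k * Q k y)).
   rewrite (fsum_ext _ _ (fun k => fsum d (fun j => Q x j * mpow d Q n j k * Q k y))).
   2:{ intros. rewrite IHn by auto. rewrite Rmult_comm, <- fsum_scal. apply fsum_ext; intros; lra. }
   rewrite fsum_comm. apply fsum_ext; intros. simpl. rewrite <- fsum_scal. apply fsum_ext; intros; lra. Qed.
End Mpow.

Definition Spath d Q n x (G : list nat -> R) :=
  lsum (paths d n) (fun p => chain_w Q (x :: p) * G (x :: p)).

Lemma Spath_ext d Q n x G1 G2 : (forall l, G1 l = G2 l) -> Spath d Q n x G1 = Spath d Q n x G2.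
Proof. intros; unfold Spath; apply lsum_ext_in; intros; rewrite H; auto. Qed.

Lemma Spath_succ d Q n x G :
  Spath d Q (S n) x G = fsum d (fun i => Q x i * Spath d Q n i (fun l => G (x :: l))).
Proof. unfold Spath. cbn [paths]. rewrite lsum_flat_map, fsum_seq. apply lsum_ext_in; intros i _.
 rewrite lsum_map. rewrite <- lsum_scal. apply lsum_ext_in; intros. simpl. lra. Qed.

Lemma Spath_shift d Q t m x phi : (x < d)%nat ->
  Spath d Q (t + m) x (fun l => phi (skipn t l)) = fsum d (fun y => mpow d Q t x y * Spath d Q m y phi).
Proof. revert x. induction t; intros x Hx.
 - simpl. rewrite fsum_delta_l with (a := fun y => Spath d Q m y phi) by auto. apply Spath_ext; auto.
 - change (S t + m)%nat with (S (t + m)). rewrite Spath_succ.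
   rewrite (fsum_ext _ _ (fun i => Q x i * fsum d (fun y => mpow d Q t i y * Spath d Q m y phi))).
   2:{ intros. f_equal. rewrite <- IHt by auto. apply Spath_ext; intros; reflexivity. }
   rewrite (fsum_ext _ _ (fun i => fsum d (fun y => Q x i * mpow d Q t i y * Spath d Q m y phi))).
   2:{ intros. rewrite <- fsum_scal. apply fsum_ext; intros; lra. }
   rewrite fsum_comm. apply fsum_ext; intros y Hy.
   rewrite mpow_S_left by auto. rewrite Rmult_comm, <- fsum_scal. apply fsum_ext; intros; lra. Qed.

Definition sumlist (c : list nat) : nat := fold_right Nat.add 0%nat c.

Fixpoint Wc d Q (g : nat -> R) (c : list nat) (x : nat) : R :=
  match c with
  | [] => 1
  | t :: c' => fsum d (fun y => mpow d Q t x y * exp (g y) * Wc d Q g c' y)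
  end.

Lemma nth_skipn' t (l : list nat) n : nth n (skipn t l) 0%nat = nth (t + n) l 0%nat.
Proof. revert l; induction t; intros; simpl; auto. destruct l; simpl; auto. destruct n; auto. Qed.

Lemma psums_shift c a : psums a c = map (Nat.add a) (psums 0 c).
Proof. revert a; induction c as [|t c IHc]; intros; simpl; auto. f_equal. rewrite IHc, (IHc t).
 rewrite map_map. apply map_ext; intros; lia. Qed.

Lemma Markov_W d Q g c x : (x < d)%nat ->
  Spath d Q (sumlist c) x (fun l => exp (lsum (psums 0 c) (fun n => g (nth n l 0%nat)))) = Wc d Q g c x.
Proof. revert x; induction c as [|t c IH]; intros x Hx.
 - unfold Spath; simpl. unfold lsum; simpl. rewrite exp_0; lra.
 - cbn [sumlist fold_right Wc]. fold (sumlist c).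
   set (phi := fun l' : list nat => exp (g (nth 0 l' 0%nat) + lsum (psums 0 c) (fun n => g (nth n l' 0%nat)))).
   rewrite (Spath_ext _ _ _ _ _ (fun l => phi (skipn t l))).
   2:{ intros l. unfold phi. cbn [psums]. rewrite Nat.add_0_l. rewrite lsum_cons. f_equal. f_equal.
       rewrite nth_skipn', Nat.add_0_r; auto. rewrite psums_shift, lsum_map. apply lsum_ext_in; intros.
       rewrite nth_skipn'; auto. }
   rewrite Spath_shift by auto. apply fsum_ext; intros y Hy.
   rewrite <- IH by auto. rewrite Rmult_assoc. f_equal. unfold Spath. rewrite <- lsum_scal.
   apply lsum_ext_in; intros. unfold phi. cbn [nth]. rewrite exp_plus. lra. Qed.

Lemma comps_fuel f1 : forall f2 m, (m <= f1)%nat -> (m <= f2)%nat -> comps f1 m = comps f2 m.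
Proof. induction f1; intros f2 m H1 H2.
 - replace m with 0%nat by lia. destruct f2; reflexivity.
 - destruct m. destruct f2; reflexivity. destruct f2; [lia|]. cbn [comps].
   rewrite !flat_map_concat_map. f_equal. apply map_ext_in; intros t Ht.
   apply in_seq in Ht. f_equal. apply IHf1; lia. Qed.

Lemma comps_sum fuel : forall n c, In c (comps fuel n) -> sumlist c = n.
Proof. induction fuel; intros n c Hc.
 - destruct n; simpl in Hc; [destruct Hc as [<-|[]]; auto| contradiction].
 - destruct n. simpl in Hc; destruct Hc as [<-|[]]; auto.
   cbn [comps] in Hc. apply in_flat_map in Hc. destruct Hc as [t [Ht Hc]].
   apply in_map_iff in Hc. destruct Hc as [c' [<- Hc']]. apply in_seq in Ht.
   apply IHfuel in Hc'. simpl. fold (sumlist c'). lia. Qed.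

Definition Uf K d Q g N x := lsum (compositions N) (fun c => lprod (map K c) * Wc d Q g c x).

Lemma EX_Spath d Q mu0 N G :
  EX d Q mu0 N G = fsum d (fun i => mu0 i * Spath d Q N i (fun l => G (fun n => nth n l 0%nat))).
Proof. unfold EX. cbn [paths]. rewrite lsum_flat_map, fsum_seq. apply lsum_ext_in; intros i _.
 rewrite lsum_map. unfold Spath. rewrite <- lsum_scal. apply lsum_ext_in; intros. simpl nth. lra. Qed.

Lemma annealedZ_U K d Q mu0 f beta h N :
  annealedZ K d Q mu0 f beta h N = fsum d (fun i => mu0 i * Uf K d Q (fun y => beta * f y + h) N i).
Proof. unfold annealedZ, Uf.
 rewrite (lsum_ext_in _ _ (fun c => fsum d (fun i => lprod (map K c) * (mu0 i * Wc d Q (fun y => beta * f y + h) c i)))).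
 - rewrite lsum_fsum. apply fsum_ext; intros. rewrite <- lsum_scal. apply lsum_ext_in; intros; lra.
 - intros c Hc. rewrite EX_Spath. rewrite <- fsum_scal. apply fsum_ext; intros i Hi. f_equal. f_equal.
   apply comps_sum in Hc. rewrite <- Hc at 1.
   rewrite <- (Markov_W d Q (fun y => beta * f y + h) c i Hi). apply Spath_ext; intros; reflexivity. Qed.

Lemma U_rec K d Q g n x :
  Uf K d Q g (S n) x = lsum (seq 1 (S n)) (fun t => fsum d (fun y => K t * mpow d Q t x y * exp (g y) * Uf K d Q g (S n - t) y)).
Proof. unfold Uf, compositions at 1. cbn [comps]. rewrite lsum_flat_map. apply lsum_ext_in; intros t Ht.
 apply in_seq in Ht. rewrite lsum_map. unfold compositions. rewrite (comps_fuel n (S n - t) (S n - t)) by lia.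
 cbn [map Wc]. unfold lprod; cbn [fold_right]. fold lprod.
 rewrite (lsum_ext_in _ _ (fun c => fsum d (fun y => K t * mpow d Q t x y * exp (g y) * (lprod (map K c) * Wc d Q g c y)))).
 - rewrite lsum_fsum. apply fsum_ext; intros. rewrite <- lsum_scal. apply lsum_ext_in; intros. unfold lprod; lra.
 - intros. rewrite <- fsum_scal. apply fsum_ext; intros. unfold lprod; lra. Qed.

Lemma lsum_ge_in {A} (l : list A) g a : (forall b, In b l -> 0 <= g b) -> In a l -> g a <= lsum l g.
Proof. induction l; simpl; intros H Ha; [contradiction|]. unfold lsum in *; simpl.
 destruct Ha as [<-|Ha].
 - assert (0 <= fold_right (fun a0 s => g a0 + s) 0 l) by (apply lsum_nonneg; auto). lra.
 - assert (g a <= fold_right (fun a s => g a + s) 0 l) by auto. assert (0 <= g a0) by auto. lra. Qed.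

Lemma lprod_nonneg (K : nat -> R) c : (forall n, 0 <= K n) -> 0 <= lprod (map K c).
Proof. intros; induction c; unfold lprod in *; simpl; [lra|]. apply Rmult_le_pos; auto. Qed.

Lemma fin_min2 T d (phi : nat -> nat -> R) : (forall N x, (N < T)%nat -> (x < d)%nat -> 0 < phi N x) ->
  exists c, 0 < c /\ forall N x, (N < T)%nat -> (x < d)%nat -> c <= phi N x.
Proof. destruct d. exists 1; split; intros; [lra|lia].
 induction T; intros H. exists 1; split; intros; [lra|lia].
 destruct IHT as [c1 [Hc1 H1]]. intros; apply H; lia.
 destruct (argmin (S d) (phi T)) as [i [Hi H2]]; [lia|].
 assert (0 < phi T i) by (apply H; lia).
 exists (Rmin c1 (phi T i)); split. apply Rmin_pos; auto. intros.
 destruct (Nat.eq_dec N T). subst. eapply Rle_trans. apply Rmin_r. apply H2; auto.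
 eapply Rle_trans. apply Rmin_l. apply H1; lia. Qed.

Section Bounds.
Variable K : nat -> R.
Variable d : nat.
Variable Q : nat -> nat -> R.
Variable g : nat -> R.
Hypothesis HQ : stochastic d Q.
Hypothesis HK : forall n, 0 <= K n.

Lemma Wc_nonneg c x : 0 <= Wc d Q g c x.
Proof. revert x; induction c; intros; simpl; [lra|]. apply fsum_nonneg; intros.
 apply Rmult_le_pos; auto. apply Rmult_le_pos. apply mpow_nonneg; auto. apply Rlt_le, exp_pos. Qed.

Lemma Uf_nonneg N x : 0 <= Uf K d Q g N x.
Proof. unfold Uf. apply lsum_nonneg; intros. apply Rmult_le_pos. apply lprod_nonneg; auto. apply Wc_nonneg. Qed.

Lemma Uf_0 x : Uf K d Q g 0 x = 1.
Proof. unfold Uf, compositions. simpl. unfold lsum, lprod; simpl. lra. Qed.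

Definition partA b T x (v : nat -> R) :=
  lsum (seq 1 T) (fun t => fsum d (fun y => K t * mpow d Q t x y * exp (g y) * exp (- b * INR t) * v y)).

Lemma U_upper b v : (forall x, (x < d)%nat -> 0 < v x) -> (0 < d)%nat ->
  (forall x T, (x < d)%nat -> partA b T x v <= v x) ->
  exists C, 0 < C /\ forall N x, (x < d)%nat -> Uf K d Q g N x <= C * exp (b * INR N) * v x.
Proof. intros Hv Hd Hp. destruct (argmin d v Hd) as [i0 [Hi0 Hmin]].
 assert (0 < v i0) by auto.
 exists (/ v i0); split. apply Rinv_0_lt_compat; auto.
 intro N. induction N as [N IH] using (well_founded_induction lt_wf). intros x Hx.
 destruct N.
 - rewrite Uf_0. simpl. rewrite Rmult_0_r, exp_0, Rmult_1_r. 
   apply (Rmult_le_reg_l (v i0)); auto. rewrite <- Rmult_assoc, Rinv_r, Rmult_1_l by lra. rewrite Rmult_1_r; auto.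
 - rewrite U_rec. eapply Rle_trans.
   + apply lsum_le with (g2 := fun t => / v i0 * exp (b * INR (S N)) *
        fsum d (fun y => K t * mpow d Q t x y * exp (g y) * exp (- b * INR t) * v y)).
     intros t Ht. apply in_seq in Ht. rewrite <- fsum_scal. apply fsum_le; intros y Hy.
     assert (0 <= K t * mpow d Q t x y * exp (g y)).
     { apply Rmult_le_pos. apply Rmult_le_pos; auto. apply mpow_nonneg; auto. apply Rlt_le, exp_pos. }
     eapply Rle_trans. apply Rmult_le_compat_l; auto. apply IH; auto. lia.
     rewrite minus_INR by lia. 
     replace (b * (INR (S N) - INR t)) with (b * INR (S N) + - b * INR t) by ring. rewrite exp_plus. lra.
   + rewrite lsum_scal. apply Rmult_le_compat_l. apply Rmult_le_pos. apply Rlt_le, Rinv_0_lt_compat; auto.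
     apply Rlt_le, exp_pos. apply Hp; auto. Qed.

Hypothesis HKpos : forall n, (1 <= n)%nat -> 0 < K n.

Lemma Uf_pos N x : (x < d)%nat -> 0 < Uf K d Q g N x.
Proof. intros Hx. destruct N. rewrite Uf_0; lra. rewrite U_rec.
 assert (Hd : (0 < d)%nat) by lia. destruct (argmin d (fun y => exp (g y)) Hd) as [j [Hj Hm]].
 eapply Rlt_le_trans. 2:{ apply lsum_ge_in with (a := S N).
   - intros t Ht. apply fsum_nonneg; intros. apply Rmult_le_pos. apply Rmult_le_pos. apply Rmult_le_pos; auto.
     apply mpow_nonneg; auto. apply Rlt_le, exp_pos. apply Uf_nonneg.
   - apply in_seq; lia. }
 eapply Rlt_le_trans with (K (S N) * exp (g j)).
 apply Rmult_lt_0_compat. apply HKpos; lia. apply exp_pos.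
 replace (K (S N) * exp (g j)) with (K (S N) * exp (g j) * fsum d (fun y => mpow d Q (S N) x y))
   by (rewrite mpow_rowsum; auto; ring).
 rewrite <- fsum_scal. apply fsum_le; intros y Hy. rewrite Nat.sub_diag, Uf_0.
 assert (0 <= mpow d Q (S N) x y) by (apply mpow_nonneg; auto). assert (0 < K (S N)) by (apply HKpos; lia).
 specialize (Hm y Hy). 
 replace (K (S N) * mpow d Q (S N) x y * exp (g y) * 1) with (K (S N) * mpow d Q (S N) x y * exp (g y)) by ring.
 replace (K (S N) * exp (g j) * mpow d Q (S N) x y) with (K (S N) * mpow d Q (S N) x y * exp (g j)) by ring.
 apply Rmult_le_compat_l; auto. apply Rmult_le_pos; lra. Qed.

Lemma U_lower b v T : (forall x, (x < d)%nat -> 0 < v x) -> (1 <= T)%nat ->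
  (forall x, (x < d)%nat -> v x <= partA b T x v) ->
  exists c, 0 < c /\ forall N x, (x < d)%nat -> c * exp (b * INR N) * v x <= Uf K d Q g N x.
Proof. intros Hv HT Hp.
 destruct (fin_min2 T d (fun N x => Uf K d Q g N x / (exp (b * INR N) * v x))) as [c [Hc Hc2]].
 { intros. unfold Rdiv. apply Rmult_lt_0_compat. apply Uf_pos; auto. apply Rinv_0_lt_compat.
   apply Rmult_lt_0_compat. apply exp_pos. auto. }
 exists c; split; auto.
 intro N. induction N as [N IH] using (well_founded_induction lt_wf). intros x Hx.
 destruct (Nat.lt_ge_cases N T) as [HNT|HNT].
 - specialize (Hc2 N x HNT Hx). assert (0 < exp (b * INR N) * v x) by (apply Rmult_lt_0_compat; [apply exp_pos|auto]).
   unfold Rdiv in Hc2. apply (Rmult_le_compat_r (exp (b * INR N) * v x)) in Hc2; [|lra].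
   rewrite Rmult_assoc, Rinv_l, Rmult_1_r in Hc2 by lra. lra.
 - destruct N as [|n]; [lia|]. rewrite U_rec.
   replace (seq 1 (S n)) with (seq 1 (T + (S n - T))) by (f_equal; lia). rewrite seq_app, lsum_app.
   assert (0 <= lsum (seq (1 + T) (S n - T)) (fun t => fsum d (fun y => K t * mpow d Q t x y * exp (g y) * Uf K d Q g (S n - t) y))).
   { apply lsum_nonneg; intros. apply fsum_nonneg; intros. apply Rmult_le_pos. apply Rmult_le_pos. apply Rmult_le_pos; auto.
     apply mpow_nonneg; auto. apply Rlt_le, exp_pos. apply Uf_nonneg. }
   enough (c * exp (b * INR (S n)) * v x <= lsum (seq 1 T) (fun t => fsum d (fun y => K t * mpow d Q t x y * exp (g y) * Uf K d Q g (S n - t) y))) by lra.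
   eapply Rle_trans. apply Rmult_le_compat_l. apply Rmult_le_pos. lra. apply Rlt_le, exp_pos. apply Hp; auto.
   unfold partA. rewrite <- lsum_scal. apply lsum_le; intros t Ht. apply in_seq in Ht.
   rewrite <- fsum_scal. apply fsum_le; intros y Hy.
   assert (0 <= K t * mpow d Q t x y * exp (g y)).
   { apply Rmult_le_pos. apply Rmult_le_pos; auto. apply mpow_nonneg; auto. apply Rlt_le, exp_pos. }
   eapply Rle_trans. 2:{ apply Rmult_le_compat_l; auto. apply IH; auto. lia. }
   rewrite minus_INR by lia.
   replace (b * (INR (S n) - INR t)) with (b * INR (S n) + - b * INR t) by ring. rewrite exp_plus. lra. Qed.
End Bounds.

Lemma cv_const c : Un_cv (fun _ => c) c.
Proof. intros e He; exists 0%nat; intros; unfold Rdist; rewrite Rminus_diag, Rabs_R0; lra. Qed.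

Lemma ser_nonneg a l : (forall n, 0 <= a n) -> infinite_sum a l -> 0 <= l.
Proof. intros. apply (@Rle_cv_lim (fun _ => 0) (sum_f_R0 a)); auto. intros; apply cond_pos_sum; auto.
 apply cv_const. Qed.

Lemma ser_partial_le a l n : (forall n, 0 <= a n) -> infinite_sum a l -> sum_f_R0 a n <= l.
Proof. intros. apply growing_ineq; auto. intro m; simpl. specialize (H (S m)); lra. Qed.

Lemma ser_scal a l c : infinite_sum a l -> infinite_sum (fun n => c * a n) (c * l).
Proof. intros H. unfold infinite_sum. 
 assert (Un_cv (fun n => c * sum_f_R0 a n) (c * l)) by (apply CV_mult; [apply cv_const|exact H]).
 intros e He; destruct (H0 e He) as [N HN]; exists N; intros.
 rewrite (sum_eq _ (fun i => a i * c)) by (intros; ring). rewrite <- scal_sum. apply HN; auto. Qed.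

Lemma ser_ext a b l : (forall n, a n = b n) -> infinite_sum a l -> infinite_sum b l.
Proof. intros Hab H e He; destruct (H e He) as [N HN]; exists N; intros.
 rewrite <- (sum_eq a b) by auto. apply HN; auto. Qed.

Lemma ser_le a b la lb : (forall n, a n <= b n) -> infinite_sum a la -> infinite_sum b lb -> la <= lb.
Proof. intros. apply (@Rle_cv_lim (sum_f_R0 a) (sum_f_R0 b)); auto. intros; apply sum_Rle; auto. Qed.

Lemma ser_minus a b la lb : infinite_sum a la -> infinite_sum b lb -> infinite_sum (fun n => a n - b n) (la - lb).
Proof. intros Ha Hb. assert (H := CV_minus _ _ _ _ Ha Hb).
 intros e He; destruct (H e He) as [N HN]; exists N; intros. rewrite minus_sum. apply HN; auto. Qed.

Lemma ser_bound a l B : (forall n, sum_f_R0 a n <= B) -> infinite_sum a l -> l <= B.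
Proof. intros. apply (@Rle_cv_lim (sum_f_R0 a) (fun _ => B)); auto. apply cv_const. Qed.

Lemma CW_upper d (A : nat -> nat -> R) v w lam mu : (0 < d)%nat ->
  (forall x y, (x < d)%nat -> (y < d)%nat -> 0 <= A x y) ->
  (forall x, (x < d)%nat -> 0 < v x) -> (forall x, (x < d)%nat -> 0 < w x) ->
  (forall x, (x < d)%nat -> fsum d (fun y => A x y * v y) = lam * v x) ->
  (forall x, (x < d)%nat -> fsum d (fun y => A x y * w y) <= mu * w x) -> lam <= mu.
Proof. intros Hd HA Hv Hw Hl Hm. destruct (argmax d (fun x => v x / w x) Hd) as [i [Hi Hmax]].
 set (s := v i / w i). assert (Hvi := Hv i Hi). assert (Hwi := Hw i Hi).
 assert (Hs : forall y, (y < d)%nat -> v y <= s * w y).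
 { intros. specialize (Hmax y H). assert (Hwy := Hw y H). unfold Rdiv in *.
   apply (Rmult_le_compat_r (w y)) in Hmax; [|lra]. rewrite Rmult_assoc, Rinv_l, Rmult_1_r in Hmax by lra.
   fold s; unfold s; unfold Rdiv; lra. }
 assert (lam * v i <= mu * v i).
 { rewrite <- Hl by auto. eapply Rle_trans. apply fsum_le with (g2 := fun y => s * (A i y * w y)).
   intros y Hy. specialize (Hs y Hy). specialize (HA i y Hi Hy). nra.
   rewrite fsum_scal. specialize (Hm i Hi). assert (0 <= s) by (unfold s, Rdiv; apply Rmult_le_pos; [lra|apply Rlt_le, Rinv_0_lt_compat; lra]).
   replace (mu * v i) with (s * (mu * w i)). apply Rmult_le_compat_l; auto.
   unfold s, Rdiv. field. lra. }
 apply Rmult_le_reg_r with (v i); auto. Qed.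

Lemma CW_lower d (A : nat -> nat -> R) v w lam rho : (0 < d)%nat ->
  (forall x y, (x < d)%nat -> (y < d)%nat -> 0 <= A x y) ->
  (forall x, (x < d)%nat -> 0 < v x) -> (forall x, (x < d)%nat -> 0 < w x) ->
  (forall x, (x < d)%nat -> fsum d (fun y => A x y * v y) = lam * v x) ->
  (forall x, (x < d)%nat -> rho * w x <= fsum d (fun y => A x y * w y)) -> rho <= lam.
Proof. intros Hd HA Hv Hw Hl Hm. destruct (argmin d (fun x => v x / w x) Hd) as [i [Hi Hmin]].
 set (s := v i / w i). assert (Hvi := Hv i Hi). assert (Hwi := Hw i Hi).
 assert (Hs : forall y, (y < d)%nat -> s * w y <= v y).
 { intros. specialize (Hmin y H). assert (Hwy := Hw y H). unfold Rdiv in *.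
   apply (Rmult_le_compat_r (w y)) in Hmin; [|lra]. rewrite (Rmult_assoc (v y)), Rinv_l, Rmult_1_r in Hmin by lra.
   fold s; unfold s; unfold Rdiv; lra. }
 assert (rho * v i <= lam * v i).
 { rewrite <- Hl by auto. eapply Rle_trans. 2:{ apply fsum_le with (g1 := fun y => s * (A i y * w y)).
   intros y Hy. specialize (Hs y Hy). specialize (HA i y Hi Hy). nra. }
   rewrite fsum_scal. specialize (Hm i Hi). assert (0 <= s) by (unfold s, Rdiv; apply Rmult_le_pos; [lra|apply Rlt_le, Rinv_0_lt_compat; lra]).
   replace (rho * v i) with (s * (rho * w i)). apply Rmult_le_compat_l; auto.
   unfold s, Rdiv. field. lra. }
 apply Rmult_le_reg_r with (v i); auto. Qed.

Lemma exp_le x y : x <= y -> exp x <= exp y.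
Proof. intros [H|H]. apply Rlt_le, exp_increasing; auto. subst; lra. Qed.

Lemma sumf_fsum d (a : nat -> nat -> R) n :
  sum_f_R0 (fun k => fsum d (fun y => a k y)) n = fsum d (fun y => sum_f_R0 (fun k => a k y) n).
Proof. induction n; simpl; auto. rewrite IHn, <- fsum_plus. auto. Qed.

Section Eig.
Variable K : nat -> R.
Variable d : nat.
Variable Q : nat -> nat -> R.
Variable f : nat -> R.
Variables beta h : R.
Hypothesis HQ : stochastic d Q.
Hypothesis HK : forall n, 0 <= K n.
Hypothesis Hd : (0 < d)%nat.
Let g := fun y => beta * f y + h.

Definition term b x y n := K (S n) * mpow d Q (S n) x y * exp (beta * f y + h) * exp (- b * INR (S n)).

Lemma term_nonneg b x y n : (y < d)%nat -> 0 <= term b x y n.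
Proof. intros. unfold term. apply Rmult_le_pos; [|apply Rlt_le, exp_pos]. apply Rmult_le_pos; [|apply Rlt_le, exp_pos].
 apply Rmult_le_pos; auto. apply mpow_nonneg; auto. Qed.

Lemma partA_sum b n x v : partA K d Q g b (S n) x v = fsum d (fun y => sum_f_R0 (term b x y) n * v y).
Proof. unfold partA. rewrite lsum_seq_sumf. rewrite sumf_fsum. apply fsum_ext; intros.
 rewrite (Rmult_comm (sum_f_R0 _ _)), scal_sum. apply sum_eq; intros. unfold term, g. replace (1 + i0)%nat with (S i0) by lia. ring. Qed.

Lemma A_nonneg b x y a : (y < d)%nat -> A_entry K d Q f b beta h x y a -> 0 <= a.
Proof. intros. apply (ser_nonneg (term b x y)); auto. intros; apply term_nonneg; auto. Qed.

Lemma partA_cv b x v (A : nat -> nat -> R) : (forall y, (y < d)%nat -> A_entry K d Q f b beta h x y (A x y)) ->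
  Un_cv (fun n => partA K d Q g b (S n) x v) (fsum d (fun y => A x y * v y)).
Proof. intros. assert (Un_cv (fun n => fsum d (fun y => sum_f_R0 (term b x y) n * v y)) (fsum d (fun y => A x y * v y))).
 { apply fsum_cv. intros. apply CV_mult. apply H; auto. apply cv_const. }
 intros e He; destruct (H0 e He) as [N HN]; exists N; intros. rewrite partA_sum; auto. Qed.

Lemma partA_le_lim b T x v (A : nat -> nat -> R) : (forall y, (y < d)%nat -> 0 <= v y) ->
  (forall y, (y < d)%nat -> A_entry K d Q f b beta h x y (A x y)) ->
  partA K d Q g b T x v <= fsum d (fun y => A x y * v y).
Proof. intros Hv HA. destruct T.
 - unfold partA; simpl. change (lsum (@nil nat) ?F) with 0. apply fsum_nonneg; intros. apply Rmult_le_pos; auto. eapply A_nonneg; eauto.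
 - rewrite partA_sum. apply fsum_le; intros. apply Rmult_le_compat_r; auto.
   apply ser_partial_le; auto. intros; apply term_nonneg; auto. apply HA; auto. Qed.

Variable lam : R -> R.
Hypothesis HPF : forall b, 0 <= b -> PF_eigenvalue K d Q f b beta h (lam b).

Lemma lam_pos b : 0 <= b -> 0 < lam b.
Proof. intros; apply HPF; auto. Qed.

Lemma lam_mono b1 b2 : 0 <= b1 -> b1 <= b2 -> lam b2 <= exp (- (b2 - b1)) * lam b1.
Proof. intros H1 H2. destruct (HPF b1 H1) as [Hl1 [A1 [v1 [HA1 [Hv1 He1]]]]].
 destruct (HPF b2 ltac:(lra)) as [Hl2 [A2 [v2 [HA2 [Hv2 He2]]]]].
 apply (CW_upper d A2 v2 v1); auto.
 - intros; eapply A_nonneg; eauto.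
 - intros x Hx. rewrite Rmult_assoc, <- He1 by auto. rewrite <- fsum_scal. apply fsum_le; intros y Hy.
   rewrite <- Rmult_assoc. apply Rmult_le_compat_r. apply Rlt_le; auto.
   apply (ser_le (term b2 x y) (fun n => exp (- (b2 - b1)) * term b1 x y n)); auto.
   + intros n. unfold term. 
     assert (0 <= K (S n) * mpow d Q (S n) x y * exp (beta * f y + h)).
     { apply Rmult_le_pos; [|apply Rlt_le, exp_pos]. apply Rmult_le_pos; auto. apply mpow_nonneg; auto. }
     assert (1 <= INR (S n)) by (rewrite S_INR; pose proof (pos_INR n); lra).
     assert (exp (- b2 * INR (S n)) <= exp (- (b2 - b1)) * exp (- b1 * INR (S n))) by (rewrite <- exp_plus; apply exp_le; nra).
     replace (exp (- (b2 - b1)) * (K (S n) * mpow d Q (S n) x y * exp (beta * f y + h) * exp (- b1 * INR (S n))))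
       with (K (S n) * mpow d Q (S n) x y * exp (beta * f y + h) * (exp (- (b2 - b1)) * exp (- b1 * INR (S n)))) by ring.
     apply Rmult_le_compat_l; auto.
   + apply HA2; auto.
   + apply ser_scal. apply HA1; auto. Qed.

Lemma lam_strict b1 b2 : 0 <= b1 -> b1 < b2 -> lam b2 < lam b1.
Proof. intros. pose proof (lam_mono b1 b2 H ltac:(lra)). pose proof (lam_pos b1 H).
 assert (exp (- (b2 - b1)) < 1) by (rewrite <- exp_0; apply exp_increasing; lra). nra. Qed.

Lemma lam_lowerT b : 0 <= b -> 1 < lam b -> exists v T, (1 <= T)%nat /\ (forall x, (x < d)%nat -> 0 < v x) /\
  forall x, (x < d)%nat -> v x <= partA K d Q g b T x v.
Proof. intros Hb Hl. destruct (HPF b Hb) as [_ [A [v [HA [Hv He]]]]].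
 destruct (fin_eventually d (fun x n => v x <= partA K d Q g b (S n) x v)) as [N HN].
 { intros x Hx. assert (Hc := partA_cv b x v A (fun y Hy => HA x y Hx Hy)). rewrite He in Hc by auto.
   assert (Hvx := Hv x Hx). destruct (Hc ((lam b - 1) * v x)) as [N HN]. apply Rmult_lt_0_compat; lra.
   exists N; intros n Hn. specialize (HN n Hn). unfold Rdist in HN. apply Rabs_def2 in HN. nra. }
 exists v, (S N); split; [lia|]; split; [auto|]. intros; apply HN; auto. Qed.

Lemma lam_upper_part b : 0 <= b -> lam b <= 1 -> exists v, (forall x, (x < d)%nat -> 0 < v x) /\
  forall x T, (x < d)%nat -> partA K d Q g b T x v <= v x.
Proof. intros Hb Hl. destruct (HPF b Hb) as [Hp [A [v [HA [Hv He]]]]]. exists v; split; auto.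
 intros. eapply Rle_trans. apply partA_le_lim; auto. intros; apply Rlt_le; auto.
 rewrite He by auto. specialize (Hv x H). nra. Qed.

Lemma lam_right b : 0 <= b -> 1 < lam b -> exists b', b < b' /\ 1 < lam b'.
Proof. intros Hb Hl. destruct (HPF b Hb) as [_ [A [v [HA [Hv He]]]]].
 set (rho := (1 + lam b) / 2).
 destruct (fin_eventually d (fun x n => rho * v x <= partA K d Q g b (S n) x v)) as [N HN].
 { intros x Hx. assert (Hc := partA_cv b x v A (fun y Hy => HA x y Hx Hy)). rewrite He in Hc by auto.
   assert (Hvx := Hv x Hx). destruct (Hc ((lam b - rho) * v x)) as [N HN]. unfold rho; apply Rmult_lt_0_compat; lra.
   exists N; intros n Hn. specialize (HN n Hn). unfold Rdist in HN. apply Rabs_def2 in HN. nra. }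
 set (T := S N). assert (HT : 0 < INR T) by (unfold T; rewrite S_INR; pose proof (pos_INR N); lra).
 assert (Hlr : 0 < ln rho) by (rewrite <- ln_1; apply ln_increasing; unfold rho; lra).
 set (del := ln rho / (2 * INR T)). assert (Hdel : 0 < del) by (unfold del; apply Rdiv_lt_0_compat; lra).
 exists (b + del); split; [lra|].
 destruct (HPF (b + del) ltac:(lra)) as [_ [A' [v' [HA' [Hv' He']]]]].
 eapply Rlt_le_trans. 2:{ apply (CW_lower d A' v' v (lam (b + del)) (exp (- (del * INR T)) * rho)); auto.
   intros; eapply A_nonneg; eauto.
   intros x Hx. eapply Rle_trans. 2:{ apply partA_le_lim with (T := T); auto. intros; apply Rlt_le; auto. }
   eapply Rle_trans. rewrite Rmult_assoc. apply Rmult_le_compat_l. apply Rlt_le, exp_pos. apply (HN x Hx N); lia.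
   unfold partA. rewrite <- lsum_scal. apply lsum_le; intros t Ht. apply in_seq in Ht.
   rewrite <- fsum_scal. apply fsum_le; intros y Hy.
   assert (0 <= K t * mpow d Q t x y * exp (g y)).
   { apply Rmult_le_pos; [|apply Rlt_le, exp_pos]. apply Rmult_le_pos; auto. apply mpow_nonneg; auto. }
   assert (0 <= v y) by (apply Rlt_le; auto).
   assert (exp (- (del * INR T)) * exp (- b * INR t) <= exp (- (b + del) * INR t)).
   { rewrite <- exp_plus. apply exp_le. assert (INR t <= INR T) by (apply le_INR; unfold T; lia). nra. }
   replace (exp (- (del * INR T)) * (K t * mpow d Q t x y * exp (g y) * exp (- b * INR t) * v y))
     with ((K t * mpow d Q t x y * exp (g y) * v y) * (exp (- (del * INR T)) * exp (- b * INR t))) by ring.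
   replace (K t * mpow d Q t x y * exp (g y) * exp (- (b + del) * INR t) * v y)
     with ((K t * mpow d Q t x y * exp (g y) * v y) * exp (- (b + del) * INR t)) by ring.
   apply Rmult_le_compat_l; auto. apply Rmult_le_pos; auto. }
 replace (del * INR T) with (ln rho / 2) by (unfold del; field; lra).
 replace rho with (exp (ln rho)) at 2 by (apply exp_ln; unfold rho; lra).
 rewrite <- exp_plus. rewrite <- exp_0. apply exp_increasing. lra. Qed.
End Eig.

Lemma exp_diff_bound F b t : 0 < F -> F / 2 <= b -> b <= F -> 1 <= t ->
  0 <= exp (- b * t) - exp (- F * t) <= (F - b) * (2 / F).
Proof. intros HF H1 H2 Ht. split.
 - assert (exp (- F * t) <= exp (- b * t)) by (apply exp_le; nra). lra.
 - assert (E1 : exp (- F * t) = exp (- b * t) * exp (- ((F - b) * t))) by (rewrite <- exp_plus; f_equal; ring).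
   pose proof (exp_ineq1_le (- ((F - b) * t))).
   pose proof (exp_ineq1_le (b * t)).
   assert (E2 : exp (- b * t) * exp (b * t) = 1) by (rewrite <- exp_plus, <- exp_0; f_equal; ring).
   set (u := exp (- b * t)) in *. set (w := exp (b * t)) in *.
   assert (0 < u) by apply exp_pos. assert (0 < w) by apply exp_pos.
   assert (u - exp (- F * t) <= u * ((F - b) * t)) by (rewrite E1; nra).
   assert (b > 0) by lra.
   assert (u * t * b <= 1) by nra.
   assert (u * t <= 2 / F).
   { apply Rmult_le_reg_r with b; auto. eapply Rle_trans; [exact H7|].
     unfold Rdiv. apply Rmult_le_reg_l with F; auto. 
     replace (F * (2 * / F * b)) with (2 * b) by (field; lra). lra. }
   nra. Qed.

Section Left.
Variable K : nat -> R.
Variable d : nat.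
Variable Q : nat -> nat -> R.
Variable f : nat -> R.
Variables beta h : R.
Hypothesis HQ : stochastic d Q.
Hypothesis HK : forall n, 0 <= K n.
Hypothesis HK1 : infinite_sum (fun n => K (S n)) 1.
Hypothesis Hd : (0 < d)%nat.

Lemma entry_cont F b x y ab aF : 0 < F -> F / 2 <= b -> b <= F -> (x < d)%nat -> (y < d)%nat ->
  A_entry K d Q f b beta h x y ab -> A_entry K d Q f F beta h x y aF ->
  ab <= aF + (F - b) * (2 / F) * exp (beta * f y + h).
Proof. intros HF H1 H2 Hx Hy Hb HFe.
 assert (Hm := ser_minus _ _ _ _ Hb HFe).
 assert (ab - aF <= (F - b) * (2 / F) * exp (beta * f y + h)); [|lra].
 apply (ser_bound _ _ _ ) with (2 := Hm). intros n.
 eapply Rle_trans. apply sum_Rle with (Bn := fun k => K (S k) * ((F - b) * (2 / F) * exp (beta * f y + h))).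
 - intros k _. unfold term.
   assert (1 <= INR (S k)) by (rewrite S_INR; pose proof (pos_INR k); lra).
   destruct (exp_diff_bound F b (INR (S k)) HF H1 H2 H).
   assert (0 <= mpow d Q (S k) x y <= 1) by (split; [apply mpow_nonneg|apply mpow_le1]; auto).
   pose proof (HK (S k)). pose proof (exp_pos (beta * f y + h)).
   assert (0 <= K (S k) * mpow d Q (S k) x y * exp (beta * f y + h)) by (apply Rmult_le_pos; [apply Rmult_le_pos|]; lra).
   replace (K (S k) * mpow d Q (S k) x y * exp (beta * f y + h) * exp (- b * INR (S k)) -
            K (S k) * mpow d Q (S k) x y * exp (beta * f y + h) * exp (- F * INR (S k)))
     with (K (S k) * mpow d Q (S k) x y * exp (beta * f y + h) * (exp (- b * INR (S k)) - exp (- F * INR (S k)))) by ring.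
   eapply Rle_trans. apply Rmult_le_compat_l; auto. apply H3.
   assert (0 <= (F - b) * (2 / F)) by (apply Rmult_le_pos; [lra| unfold Rdiv; apply Rmult_le_pos; [lra| apply Rlt_le, Rinv_0_lt_compat; lra]]).
   assert (K (S k) * mpow d Q (S k) x y <= K (S k)) by nra.
   replace (K (S k) * ((F - b) * (2 / F) * exp (beta * f y + h))) with (K (S k) * (exp (beta * f y + h) * ((F - b) * (2 / F)))) by ring.
   rewrite (Rmult_assoc (K (S k) * mpow d Q (S k) x y)). apply Rmult_le_compat_r; auto. apply Rmult_le_pos; lra.
 - rewrite <- scal_sum. 
   assert (sum_f_R0 (fun k => K (S k)) n <= 1) by (apply ser_partial_le; auto).
   assert (0 <= (F - b) * (2 / F) * exp (beta * f y + h)).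
   { apply Rmult_le_pos. apply Rmult_le_pos; [lra| unfold Rdiv; apply Rmult_le_pos; [lra| apply Rlt_le, Rinv_0_lt_compat; lra]]. apply Rlt_le, exp_pos. }
   nra. Qed.

Variable lam : R -> R.
Hypothesis HPF : forall b, 0 <= b -> PF_eigenvalue K d Q f b beta h (lam b).

Lemma lam_left F : 0 < F -> lam F < 1 -> exists b, 0 <= b < F /\ lam b < 1.
Proof. intros HF Hl. destruct (HPF F ltac:(lra)) as [HlF [AF [w [HAF [Hw HeF]]]]].
 destruct (argmin d w Hd) as [i0 [Hi0 Hmin]]. assert (Hwi := Hw i0 Hi0).
 set (S := fsum d (fun y => exp (beta * f y + h) * w y)).
 assert (HS : 0 < S).
 { unfold S. eapply Rlt_le_trans with (exp (beta * f i0 + h) * w i0).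
   apply Rmult_lt_0_compat; auto; apply exp_pos.
   apply fsum_ge_term with (g := fun y => exp (beta * f y + h) * w y); auto. intros. apply Rmult_le_pos; [apply Rlt_le, exp_pos| apply Rlt_le; auto]. }
 set (kap := (1 - lam F) * w i0 / (2 * S)).
 assert (Hkap : 0 < kap) by (unfold kap; apply Rdiv_lt_0_compat; [apply Rmult_lt_0_compat|]; lra).
 set (eta := Rmin (1 / 2) kap).
 assert (Heta : 0 < eta) by (unfold eta; apply Rmin_pos; lra).
 assert (Heta1 : eta <= 1/2) by apply Rmin_l. assert (Heta2 : eta <= kap) by apply Rmin_r.
 set (b := F - F / 2 * eta).
 assert (Hb1 : F / 2 <= b) by (unfold b; nra). assert (Hb2 : b < F) by (unfold b; nra).
 exists b; split; [lra|].
 assert (Hetab : (F - b) * (2 / F) = eta) by (unfold b; field; lra).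
 destruct (HPF b ltac:(lra)) as [Hlb [Ab [vb [HAb [Hvb Heb]]]]].
 assert (lam b <= lam F + eta * S / w i0).
 { apply (CW_upper d Ab vb w); auto.
   - intros; eapply A_nonneg; eauto.
   - intros x Hx. eapply Rle_trans.
     apply fsum_le with (g2 := fun y => (AF x y + eta * exp (beta * f y + h)) * w y).
     { intros y Hy. apply Rmult_le_compat_r. apply Rlt_le; auto. rewrite <- Hetab.
       apply (entry_cont F b x y); auto; lra. }
     rewrite (fsum_ext _ _ (fun y => AF x y * w y + eta * (exp (beta * f y + h) * w y))) by (intros; ring).
     rewrite fsum_plus, fsum_scal, HeF by auto. fold S.
     assert (Hwx := Hmin x Hx). assert (0 < w x) by auto.
     assert (eta * S <= eta * S / w i0 * w x).
     { replace (eta * S / w i0 * w x) with (eta * S * (w x / w i0)) by (field; lra).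
       assert (1 <= w x / w i0). { apply (Rmult_le_reg_r (w i0)); auto. unfold Rdiv. rewrite Rmult_assoc, Rinv_l, Rmult_1_r by lra. lra. }
       assert (0 <= eta * S) by (apply Rmult_le_pos; lra). nra. }
     nra. }
 assert (eta * S / w i0 <= (1 - lam F) / 2).
 { apply Rle_trans with (kap * S / w i0). unfold Rdiv. apply Rmult_le_compat_r. apply Rlt_le, Rinv_0_lt_compat; auto.
   apply Rmult_le_compat_r; lra. unfold kap. right. field. lra. }
 lra. Qed.
End Left.

Lemma lam_hscale K d Q f beta h l1 l0 b : stochastic d Q -> (forall n, 0 <= K n) -> (0 < d)%nat ->
  PF_eigenvalue K d Q f b beta h l1 -> PF_eigenvalue K d Q f b beta 0 l0 -> l1 = exp h * l0.
Proof. intros HQ HK Hd [Hl1 [A1 [v1 [HA1 [Hv1 He1]]]]] [Hl0 [A0 [v0 [HA0 [Hv0 He0]]]]].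
 assert (HAe : forall x y, (x < d)%nat -> (y < d)%nat -> A1 x y = exp h * A0 x y).
 { intros. apply (uniqueness_sum (term K d Q f beta h b x y)). apply HA1; auto.
   apply ser_ext with (fun n => exp h * term K d Q f beta 0 b x y n). intros; unfold term.
   rewrite (exp_plus (beta * f y) h). rewrite Rplus_0_r. ring. apply ser_scal. apply HA0; auto. }
 apply Rle_antisym.
 - apply (CW_upper d A1 v1 v0); auto. intros; eapply A_nonneg; eauto.
   intros. right. rewrite (fsum_ext _ _ (fun y => exp h * (A0 x y * v0 y))). rewrite fsum_scal, He0 by auto. ring.
   intros; rewrite HAe by auto; ring.
 - apply (CW_lower d A1 v1 v0); auto. intros; eapply A_nonneg; eauto.
   intros. right. rewrite (fsum_ext _ _ (fun y => exp h * (A0 x y * v0 y))). rewrite fsum_scal, He0 by auto. ring.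
   intros; rewrite HAe by auto; ring. Qed.

Lemma half_floor n : (2 <= n)%nat ->
  let m := Z.to_nat (Int_part (/ 2 * INR n)) in (1 <= m)%nat /\ 2 * INR m <= INR n.
Proof. intros Hn m. destruct (base_Int_part (/ 2 * INR n)) as [H1 H2].
 assert (H2n : 2 <= INR n) by (apply (le_INR 2); auto).
 assert (Hz : (0 < Int_part (/ 2 * INR n))%Z) by (apply lt_IZR; simpl; lra).
 assert (HINR : INR m = IZR (Int_part (/ 2 * INR n))) by (unfold m; rewrite INR_IZR_INZ, Z2Nat.id; auto; lia).
 split. unfold m; lia. lra. Qed.

Lemma L_lower L : (forall n, 0 < L n) -> slowly_varying L ->
  exists m0, 0 < m0 /\ forall n, (1 <= n)%nat -> m0 / INR n <= L n.
Proof. intros HL Hsv. destruct (Hsv (/ 2) ltac:(lra) 1 ltac:(lra)) as [n0 Hn0].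
 set (n1 := max n0 2).
 destruct (fin_min2 n1 1 (fun N _ => L N)) as [c [Hc Hc2]]; auto.
 exists c; split; auto.
 intro n. induction n as [n IH] using (well_founded_induction lt_wf). intros Hn.
 assert (HnR : 1 <= INR n) by (apply (le_INR 1); auto).
 destruct (Nat.lt_ge_cases n n1).
 - specialize (Hc2 n 0%nat H ltac:(lia)). unfold Rdiv.
   assert (/ INR n <= 1). { rewrite <- Rinv_1. apply Rinv_le_contravar; lra. } nra.
 - destruct (half_floor n ltac:(lia)) as [Hm1 Hm2].
   set (m := Z.to_nat (Int_part (/ 2 * INR n))) in *.
   assert (Hmn : (m < n)%nat). { apply INR_lt. assert (1 <= INR m) by (apply (le_INR 1); auto). lra. }
   specialize (IH m Hmn Hm1). specialize (Hn0 n ltac:(lia)). unfold Rdist in Hn0. apply Rabs_def2 in Hn0.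
   fold m in Hn0. destruct Hn0 as [Ha _]. assert (HLn := HL n). assert (HLm := HL m).
   assert (L m < 2 * L n). { unfold Rdiv in Ha. apply (Rmult_lt_compat_r (L n)) in Ha; auto.
     rewrite Rmult_minus_distr_r, Rmult_assoc, Rinv_l, Rmult_1_r in Ha by lra. lra. }
   assert (HmR : 1 <= INR m) by (apply (le_INR 1); auto).
   apply Rle_trans with (c / (2 * INR m)).
   + unfold Rdiv. apply Rmult_le_compat_l; [lra|]. apply Rinv_le_contravar; lra.
   + unfold Rdiv in *. rewrite Rinv_mult. 
     assert (c * / INR m <= L m) by auto. lra. Qed.

Lemma exp_nmul m x : exp (INR m * x) = exp x ^ m.
Proof. induction m. simpl. rewrite Rmult_0_l, exp_0; auto. rewrite S_INR, Rmult_plus_distr_r, exp_plus, IHm. rewrite Rmult_1_l. simpl. rewrite Rmult_comm. reflexivity. Qed.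

Lemma K_exp alpha L K : 0 <= alpha -> (forall n, 0 < L n) -> slowly_varying L ->
  (forall n, (1 <= n)%nat -> K n = L n * Rpower (INR n) (- (1 + alpha))) ->
  forall eps B, 0 < eps -> exists T, (1 <= T)%nat /\ B <= K T * exp (eps * INR T).
Proof. intros Ha HL Hsv HK eps B He. destruct (L_lower L HL Hsv) as [m0 [Hm0 Hm]].
 destruct (INR_archimed 1 (2 + alpha) ltac:(lra)) as [k Hk]. rewrite Rmult_1_r in Hk.
 set (c := (eps / INR (S k)) ^ (S k)).
 assert (Hc : 0 < c) by (unfold c; apply pow_lt; apply Rdiv_lt_0_compat; auto; apply lt_0_INR; lia).
 destruct (INR_archimed (m0 * c) (Rmax B 0)) as [T0 HT0]. apply Rmult_lt_0_compat; auto.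
 set (T := S T0). exists T; split; [unfold T; lia|].
 assert (HT1 : 1 <= INR T) by (apply (le_INR 1); unfold T; lia).
 assert (HTT0 : INR T0 <= INR T) by (apply le_INR; unfold T; lia).
 rewrite HK by (unfold T; lia).
 assert (HR : Rpower (INR T) (- (1 + alpha)) >= / INR T ^ k * INR T).
 { assert (Rpower (INR T) (- (1 + alpha)) = Rpower (INR T) (- (2 + alpha)) * INR T).
   { replace (- (1 + alpha)) with (- (2 + alpha) + 1) by ring. rewrite Rpower_plus, Rpower_1 by lra. auto. }
   rewrite H. apply Rle_ge. apply Rmult_le_compat_r; [lra|].
   rewrite Rpower_Ropp. rewrite <- Rpower_pow by lra. apply Rinv_le_contravar.
   unfold Rpower; apply exp_pos. apply Rle_Rpower; lra. }
 assert (HE : exp (eps * INR T) >= (eps * INR T / INR (S k)) ^ (S k)).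
 { replace (eps * INR T) with (INR (S k) * (eps * INR T / INR (S k))) at 1 by (field; apply not_0_INR; lia).
   rewrite exp_nmul. apply Rle_ge. apply pow_incr. split.
   apply Rlt_le, Rdiv_lt_0_compat. nra. apply lt_0_INR; lia.
   pose proof (exp_ineq1_le (eps * INR T / INR (S k))). lra. }
 assert (HLT : m0 / INR T <= L T) by (apply Hm; unfold T; lia).
 assert (Hpow : (eps * INR T / INR (S k)) ^ (S k) = c * INR T ^ (S k)).
 { unfold c. rewrite <- Rpow_mult_distr. f_equal. field. apply not_0_INR; lia. }
 assert (HTk : 0 < INR T ^ k) by (apply pow_lt; lra).
 assert (Hfin : L T * Rpower (INR T) (- (1 + alpha)) * exp (eps * INR T) >= m0 * c * INR T).
 { apply Rle_ge. eapply Rle_trans with (m0 / INR T * (/ INR T ^ k * INR T) * (c * INR T ^ (S k))).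
   - right. change (INR T ^ S k) with (INR T * INR T ^ k). field. split; lra.
   - rewrite <- Hpow. apply Rmult_le_compat. 
     + apply Rmult_le_pos. apply Rlt_le, Rdiv_lt_0_compat; lra. apply Rmult_le_pos. apply Rlt_le, Rinv_0_lt_compat; lra. lra.
     + apply pow_le. apply Rlt_le, Rdiv_lt_0_compat. nra. apply lt_0_INR; lia.
     + apply Rmult_le_compat; try lra. apply Rlt_le, Rdiv_lt_0_compat; lra.
       apply Rmult_le_pos. apply Rlt_le, Rinv_0_lt_compat; lra. lra.
     + lra. }
 assert (B <= m0 * c * INR T).
 { pose proof (Rmax_l B 0). assert (0 < m0 * c) by (apply Rmult_lt_0_compat; auto). nra. }
 lra. Qed.

Lemma ev_to_cv (u : nat -> R) F :
  (forall b, b < F -> exists N0, forall N, (N >= N0)%nat -> b <= u N) ->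
  (forall b, F < b -> exists N0, forall N, (N >= N0)%nat -> u N <= b) -> Un_cv u F.
Proof. intros Hl Hu e He. destruct (Hl (F - e / 2) ltac:(lra)) as [N1 H1].
 destruct (Hu (F + e / 2) ltac:(lra)) as [N2 H2]. exists (max N1 N2). intros N HN.
 specialize (H1 N ltac:(lia)). specialize (H2 N ltac:(lia)). unfold Rdist. apply Rabs_def1; lra. Qed.

Lemma low_to_ev (Z : nat -> R) b c : 0 < c -> (forall N, c * exp (b * INR N) <= Z N) ->
  forall b', b' < b -> exists N0, forall N, (N >= N0)%nat -> b' <= ln (Z N) / INR N.
Proof. intros Hc HZ b' Hb'. destruct (INR_archimed (b - b') (Rabs (ln c))) as [N0 HN0]; [lra|].
 exists (S N0). intros N HN. assert (HNR : INR N >= INR (S N0)) by (apply Rle_ge, le_INR; lia).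
 rewrite S_INR in HNR. pose proof (pos_INR N0).
 assert (Hpos : 0 < c * exp (b * INR N)) by (apply Rmult_lt_0_compat; auto; apply exp_pos).
 assert (ln (c * exp (b * INR N)) <= ln (Z N)).
 { destruct (Rle_lt_or_eq_dec _ _ (HZ N)). apply Rlt_le, ln_increasing; auto. rewrite e; lra. }
 rewrite ln_mult, ln_exp in H0 by (auto; apply exp_pos).
 apply Rmult_le_reg_r with (INR N). lra. unfold Rdiv. rewrite Rmult_assoc, Rinv_l, Rmult_1_r by lra.
 pose proof (Rabs_Ropp (ln c)). pose proof (Rle_abs (- ln c)). nra. Qed.

Lemma up_to_ev (Z : nat -> R) b C : 0 < C -> (forall N, 0 < Z N) -> (forall N, Z N <= C * exp (b * INR N)) ->
  forall b', b < b' -> exists N0, forall N, (N >= N0)%nat -> ln (Z N) / INR N <= b'.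
Proof. intros Hc HZp HZ b' Hb'. destruct (INR_archimed (b' - b) (Rabs (ln C))) as [N0 HN0]; [lra|].
 exists (S N0). intros N HN. assert (HNR : INR N >= INR (S N0)) by (apply Rle_ge, le_INR; lia).
 rewrite S_INR in HNR. pose proof (pos_INR N0).
 assert (ln (Z N) <= ln (C * exp (b * INR N))).
 { destruct (Rle_lt_or_eq_dec _ _ (HZ N)). apply Rlt_le, ln_increasing; auto. rewrite e; lra. }
 rewrite ln_mult, ln_exp in H0 by (auto; apply exp_pos).
 apply Rmult_le_reg_r with (INR N). lra. unfold Rdiv. rewrite Rmult_assoc, Rinv_l, Rmult_1_r by lra.
 pose proof (Rle_abs (ln C)). nra. Qed.

Section Main.
Variable K : nat -> R.
Variable d : nat.
Variable Q : nat -> nat -> R.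
Variables mu0 f : nat -> R.
Variables beta h : R.
Hypothesis HQ : stochastic d Q.
Hypothesis HK : forall n, 0 <= K n.
Hypothesis HKpos : forall n, (1 <= n)%nat -> 0 < K n.
Hypothesis HK1 : infinite_sum (fun n => K (S n)) 1.
Hypothesis Hd : (0 < d)%nat.
Hypothesis Hmu : (forall x, (x < d)%nat -> 0 <= mu0 x) /\ fsum d mu0 = 1.
Hypothesis Kexp : forall eps B, 0 < eps -> exists T, (1 <= T)%nat /\ B <= K T * exp (eps * INR T).
Variable lam : R -> R.
Hypothesis HPF : forall b, 0 <= b -> PF_eigenvalue K d Q f b beta h (lam b).
Let g := fun y => beta * f y + h.
Let Z := fun N => annealedZ K d Q mu0 f beta h N.

Lemma Z_low b v T : (forall x, (x < d)%nat -> 0 < v x) -> (1 <= T)%nat ->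
  (forall x, (x < d)%nat -> v x <= partA K d Q g b T x v) ->
  exists c, 0 < c /\ forall N, c * exp (b * INR N) <= Z N.
Proof. intros Hv HT Hp. destruct (U_lower K d Q g HQ HK HKpos b v T Hv HT Hp) as [c [Hc HU]].
 destruct (argmin d v Hd) as [i [Hi Hmin]].
 exists (c * v i); split. apply Rmult_lt_0_compat; auto.
 intros N. unfold Z. rewrite annealedZ_U. fold g. destruct Hmu as [Hm1 Hm2].
 apply Rle_trans with (fsum d (fun j => mu0 j * (c * exp (b * INR N) * v i))).
 - rewrite (fsum_ext _ _ (fun j => (c * exp (b * INR N) * v i) * mu0 j)) by (intros; ring).
   rewrite fsum_scal, Hm2. lra.
 - apply fsum_le; intros j Hj. apply Rmult_le_compat_l; auto. eapply Rle_trans; [|apply HU; auto].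
   apply Rmult_le_compat_l; auto. apply Rmult_le_pos; [lra| apply Rlt_le, exp_pos]. Qed.

Lemma Z_pos N : 0 < Z N.
Proof. unfold Z. rewrite annealedZ_U. fold g. destruct Hmu as [Hm1 Hm2].
 destruct (argmin d (fun x => Uf K d Q g N x) Hd) as [i [Hi Hmin]].
 apply Rlt_le_trans with (fsum d (fun j => mu0 j * Uf K d Q g N i)).
 - rewrite (fsum_ext _ _ (fun j => Uf K d Q g N i * mu0 j)) by (intros; ring). rewrite fsum_scal, Hm2.
   rewrite Rmult_1_r. apply Uf_pos; auto.
 - apply fsum_le; intros. apply Rmult_le_compat_l; auto. Qed.

Lemma Z_up b v : (forall x, (x < d)%nat -> 0 < v x) ->
  (forall x T, (x < d)%nat -> partA K d Q g b T x v <= v x) ->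
  exists C, 0 < C /\ forall N, Z N <= C * exp (b * INR N).
Proof. intros Hv Hp. destruct (U_upper K d Q g HQ HK b v Hv Hd Hp) as [C [HC HU]].
 destruct (argmax d v Hd) as [i [Hi Hmax]].
 exists (C * v i); split. apply Rmult_lt_0_compat; auto.
 intros N. unfold Z. rewrite annealedZ_U. fold g. destruct Hmu as [Hm1 Hm2].
 apply Rle_trans with (fsum d (fun j => mu0 j * (C * exp (b * INR N) * v i))).
 - apply fsum_le; intros j Hj. apply Rmult_le_compat_l; auto. eapply Rle_trans; [apply HU; auto|].
   apply Rmult_le_compat_l; auto. apply Rmult_le_pos; [lra| apply Rlt_le, exp_pos].
 - rewrite (fsum_ext _ _ (fun j => (C * exp (b * INR N) * v i) * mu0 j)) by (intros; ring).
   rewrite fsum_scal, Hm2. lra. Qed.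

Lemma neg_lower b : b < 0 -> exists c, 0 < c /\ forall N, c * exp (b * INR N) <= Z N.
Proof. intros Hb. destruct (argmin d g Hd) as [j [Hj Hmin]].
 destruct (Kexp (- b) (exp (- g j)) ltac:(lra)) as [T [HT HKT]].
 apply (Z_low b (fun _ => 1) T); auto. intros; lra.
 intros x Hx. unfold partA.
 replace (seq 1 T) with (seq 1 (pred T) ++ [T]).
 2:{ destruct T as [|T']; [lia|]. rewrite (seq_S T' 1). reflexivity. }
 rewrite lsum_app. assert (0 <= lsum (seq 1 (pred T)) (fun t => fsum d (fun y => K t * mpow d Q t x y * exp (g y) * exp (- b * INR t) * 1))).
 { apply lsum_nonneg; intros. apply fsum_nonneg; intros. repeat apply Rmult_le_pos; try lra; auto.
   apply mpow_nonneg; auto. apply Rlt_le, exp_pos. apply Rlt_le, exp_pos. }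
 rewrite lsum_cons, lsum_nil.
 enough (1 <= fsum d (fun y => K T * mpow d Q T x y * exp (g y) * exp (- b * INR T) * 1)) by lra.
 apply Rle_trans with (fsum d (fun y => (K T * exp (- b * INR T) * exp (g j)) * mpow d Q T x y)).
 - rewrite fsum_scal, mpow_rowsum by auto. rewrite Rmult_1_r.
   replace (- b * INR T) with (- b * INR T) by ring.
   apply Rmult_le_reg_r with (exp (- g j)). apply exp_pos. rewrite Rmult_assoc, <- exp_plus.
   replace (g j + - g j) with 0 by ring. rewrite exp_0. lra.
 - apply fsum_le; intros y Hy. specialize (Hmin y Hy).
   assert (0 <= mpow d Q T x y) by (apply mpow_nonneg; auto).
   assert (0 <= K T * exp (- b * INR T)) by (apply Rmult_le_pos; auto; apply Rlt_le, exp_pos).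
   assert (exp (g j) <= exp (g y)) by (apply exp_le; auto).
   assert (0 <= K T * exp (- b * INR T) * mpow d Q T x y) by (apply Rmult_le_pos; auto).
   replace (K T * mpow d Q T x y * exp (g y) * exp (- b * INR T) * 1) with (K T * exp (- b * INR T) * mpow d Q T x y * exp (g y)) by ring.
   replace (K T * exp (- b * INR T) * exp (g j) * mpow d Q T x y) with (K T * exp (- b * INR T) * mpow d Q T x y * exp (g j)) by ring.
   apply Rmult_le_compat_l; auto. Qed.

Definition Eset b := b = 0 \/ (0 <= b /\ 1 < lam b).

Lemma per_point : exists F, Un_cv (fun N => ln (Z N) / INR N) F /\ 0 <= F /\
   (1 < lam 0 -> 0 < F /\ lam F = 1 /\ (forall b, 0 < b -> lam b = 1 -> b = F)) /\
   (lam 0 <= 1 -> F = 0).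
Proof.
 assert (Hl0 := lam_pos K d Q f beta h lam HPF 0 ltac:(lra)).
 destruct (completeness Eset) as [F [HF1 HF2]].
 { exists (lam 0). intros b [Hb|[Hb Hlb]]. lra.
   pose proof (lam_mono K d Q f beta h HQ HK Hd lam HPF 0 b ltac:(lra) Hb).
   rewrite Rminus_0_r in H. pose proof (exp_ineq1_le b). 
   assert (1 < exp (- b) * lam 0) by lra. rewrite exp_Ropp in H1.
   assert (0 < exp b) by apply exp_pos.
   assert (exp b < lam 0). { apply Rmult_lt_reg_r with (/ exp b). apply Rinv_0_lt_compat; auto.
     rewrite Rinv_r by lra. lra. } lra. }
 { exists 0. left; auto. }
 assert (HF0 : 0 <= F) by (apply HF1; left; auto).
 assert (P1 : forall b, 0 <= b < F -> 1 < lam b).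
 { intros b Hb. destruct (Rlt_le_dec 1 (lam b)); auto. exfalso.
   assert (F <= b); [|lra]. apply HF2. intros e [He|[He Hle]]. lra.
   destruct (Rle_lt_dec e b); auto. pose proof (lam_strict K d Q f beta h HQ HK Hd lam HPF b e ltac:(lra) r0). lra. }
 assert (P2 : forall b, F < b -> lam b <= 1).
 { intros b Hb. destruct (Rle_lt_dec (lam b) 1); auto. exfalso. assert (b <= F) by (apply HF1; right; split; lra). lra. }
 exists F. split; [|split; [auto|split]].
 - apply ev_to_cv.
   + intros b Hb. destruct (Rlt_le_dec b 0).
     * destruct (neg_lower ((b + Rmin F 0) / 2)) as [c [Hc Hlow]]. unfold Rmin; destruct (Rle_dec F 0); lra.
       apply (low_to_ev Z _ c Hc Hlow). unfold Rmin; destruct (Rle_dec F 0); lra.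
     * set (b2 := (b + F) / 2). assert (Hb2 : 1 < lam b2) by (apply P1; unfold b2; lra).
       destruct (lam_lowerT K d Q f beta h Hd lam HPF b2 ltac:(unfold b2; lra) Hb2) as [v [T [HT [Hv Hp]]]].
       destruct (Z_low b2 v T Hv HT Hp) as [c [Hc Hlow]].
       apply (low_to_ev Z _ c Hc Hlow). unfold b2; lra.
   + intros b Hb. set (b2 := (b + F) / 2). assert (Hb2 : lam b2 <= 1) by (apply P2; unfold b2; lra).
     destruct (lam_upper_part K d Q f beta h HQ HK Hd lam HPF b2 ltac:(unfold b2; lra) Hb2) as [v [Hv Hp]].
     destruct (Z_up b2 v Hv Hp) as [C [HC Hup]].
     apply (up_to_ev Z _ C HC Z_pos Hup). unfold b2; lra.
 - intros H0. assert (HFpos : 0 < F).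
   { destruct (lam_right K d Q f beta h HQ HK Hd lam HPF 0 ltac:(lra) H0) as [b' [Hb' Hlb']].
     assert (b' <= F) by (apply HF1; right; split; lra). lra. }
   assert (HlF : lam F = 1).
   { destruct (Rtotal_order (lam F) 1) as [Hlt|[Heq|Hgt]]; auto.
     - destruct (lam_left K d Q f beta h HQ HK HK1 Hd lam HPF F HFpos Hlt) as [b [Hb Hlb]].
       pose proof (P1 b Hb). lra.
     - destruct (lam_right K d Q f beta h HQ HK Hd lam HPF F HF0 Hgt) as [b' [Hb' Hlb']].
       pose proof (P2 b' Hb'). lra. }
   split; auto. split; auto. intros b Hb Hlb.
   destruct (Rtotal_order b F) as [Hlt|[Heq|Hgt]]; auto.
   + pose proof (P1 b ltac:(lra)). lra.
   + pose proof (lam_strict K d Q f beta h HQ HK Hd lam HPF F b HF0 Hgt). lra.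
 - intros H0. destruct (Rle_lt_dec F 0). lra. exfalso.
   pose proof (P1 (F / 2) ltac:(lra)).
   pose proof (lam_strict K d Q f beta h HQ HK Hd lam HPF 0 (F / 2) ltac:(lra) ltac:(lra)). lra.
Qed.
End Main.

Lemma comps_pos fuel : forall n c, In c (comps fuel n) -> forall t, In t c -> (1 <= t)%nat.
Proof. induction fuel; intros n c Hc t Ht.
 - destruct n; simpl in Hc; [destruct Hc as [<-|[]]; destruct Ht| contradiction].
 - destruct n. simpl in Hc; destruct Hc as [<-|[]]; destruct Ht.
   cbn [comps] in Hc. apply in_flat_map in Hc. destruct Hc as [t0 [Ht0 Hc]].
   apply in_map_iff in Hc. destruct Hc as [c' [<- Hc']]. apply in_seq in Ht0.
   destruct Ht as [<-|Ht]. lia. eapply IHfuel; eauto. Qed.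

Definition Kfix (K : nat -> R) n := match n with O => 0 | S m => K (S m) end.

Lemma lprod_Kfix K c : (forall t, In t c -> (1 <= t)%nat) -> lprod (map K c) = lprod (map (Kfix K) c).
Proof. induction c; intros; auto. unfold lprod in *; simpl. rewrite IHc by (intros; apply H; simpl; auto).
 destruct a. specialize (H 0%nat (or_introl eq_refl)). lia. reflexivity. Qed.

Lemma annealedZ_Kfix K d Q mu0 f beta h N :
  annealedZ K d Q mu0 f beta h N = annealedZ (Kfix K) d Q mu0 f beta h N.
Proof. unfold annealedZ. apply lsum_ext_in; intros c Hc. rewrite lprod_Kfix; auto.
 intros; eapply comps_pos; eauto. Qed.

Lemma Un_cv_ext u v l : (forall n, u n = v n) -> Un_cv u l -> Un_cv v l.
Proof. intros H Hu e He; destruct (Hu e He) as [N HN]; exists N; intros; rewrite <- H; auto. Qed.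

Theorem mainTheorem1 (alpha : R) (L K : nat -> R) (d : nat)
  (Q : nat -> nat -> R) (mu0 f : nat -> R) (lam : R -> R -> R -> R) :
  0 <= alpha ->
  (forall n, 0 < L n) ->
  slowly_varying L ->
  (forall n, (1 <= n)%nat -> K n = L n * Rpower (INR n) (- (1 + alpha))) ->
  infinite_sum (fun n => K (S n)) 1 ->
  (0 < d)%nat ->
  stochastic d Q ->
  irreducible d Q ->
  invariant_distribution d Q mu0 ->
  fsum d (fun x => mu0 x * f x) = 0 ->
  (forall b beta h, 0 <= b -> 0 <= beta -> PF_eigenvalue K d Q f b beta h (lam b beta h)) ->
  exists Fa : R -> R -> R,
    (forall beta h, 0 <= beta ->
       Un_cv (fun N => ln (annealedZ K d Q mu0 f beta h N) / INR N) (Fa beta h) /\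
       0 <= Fa beta h /\
       (1 < lam 0 beta h ->
          0 < Fa beta h /\ lam (Fa beta h) beta h = 1 /\
          (forall b, 0 < b -> lam b beta h = 1 -> b = Fa beta h)) /\
       (lam 0 beta h <= 1 -> Fa beta h = 0)) /\
    (forall beta, 0 <= beta ->
       is_lub (fun h => Fa beta h = 0) (- ln (lam 0 beta 0))).
Proof.
 intros Ha HL Hsv HKf HK1 Hd HQ Hirr [Hm1 [Hm2 _]] _ HPF.
 set (K' := Kfix K).
 assert (HK' : forall n, 0 <= K' n).
 { intros [|n]; simpl; [lra|]. rewrite HKf by lia. apply Rlt_le, Rmult_lt_0_compat; auto. unfold Rpower; apply exp_pos. }
 assert (HKp : forall n, (1 <= n)%nat -> 0 < K' n).
 { intros [|n] Hn; [lia|]. simpl. rewrite HKf by lia. apply Rmult_lt_0_compat; auto. unfold Rpower; apply exp_pos. }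
 assert (HK1' : infinite_sum (fun n => K' (S n)) 1) by exact HK1.
 assert (Kexp : forall eps B, 0 < eps -> exists T, (1 <= T)%nat /\ B <= K' T * exp (eps * INR T)).
 { intros eps B He. destruct (K_exp alpha L K Ha HL Hsv HKf eps B He) as [T [HT HB]].
   exists T; split; auto. destruct T; [lia|]. exact HB. }
 assert (HPF' : forall beta h, 0 <= beta -> forall b, 0 <= b -> PF_eigenvalue K' d Q f b beta h (lam b beta h)).
 { intros. exact (HPF b beta h H0 H). }
 set (P := fun beta h F => Un_cv (fun N => ln (annealedZ K d Q mu0 f beta h N) / INR N) F /\ 0 <= F /\
   (1 < lam 0 beta h -> 0 < F /\ lam F beta h = 1 /\ (forall b, 0 < b -> lam b beta h = 1 -> b = F)) /\
   (lam 0 beta h <= 1 -> F = 0)).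
 assert (Hex : forall beta h, exists F, 0 <= beta -> P beta h F).
 { intros beta h. destruct (Rle_dec 0 beta) as [Hb|Hb]; [|exists 0; intros; lra].
   destruct (per_point K' d Q mu0 f beta h HQ HK' HKp HK1' Hd (conj Hm1 Hm2) Kexp (fun b => lam b beta h) (HPF' beta h Hb))
     as [F [H1 H2]].
   exists F; intros _. split; auto. eapply Un_cv_ext; [|exact H1]. intros n; rewrite (annealedZ_Kfix K d Q mu0 f beta h n). reflexivity. }
 set (Fa := fun beta h => proj1_sig (constructive_indefinite_description _ (Hex beta h))).
 assert (HFa : forall beta h, 0 <= beta -> P beta h (Fa beta h)).
 { intros. unfold Fa. destruct (constructive_indefinite_description _ (Hex beta h)) as [F HF]. simpl. auto. }
 exists Fa. split.
 - intros beta h Hb. apply HFa; auto.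
 - intros beta Hb.
   assert (Hl00 : 0 < lam 0 beta 0) by (apply (HPF 0 beta 0); lra).
   assert (Hsc : forall h, lam 0 beta h = exp h * lam 0 beta 0).
   { intros. apply (lam_hscale K' d Q f beta h _ _ 0 HQ HK' Hd); apply HPF'; auto; lra. }
   assert (Hiff : forall h, Fa beta h = 0 <-> h <= - ln (lam 0 beta 0)).
   { intros h. destruct (HFa beta h Hb) as [_ [_ [H3 H4]]].
     assert (E : exp h * lam 0 beta 0 <= 1 <-> h <= - ln (lam 0 beta 0)).
     { rewrite <- (exp_ln (lam 0 beta 0)) at 1 by auto. rewrite <- exp_plus. split; intros.
       - destruct (Rle_lt_dec h (- ln (lam 0 beta 0))); auto. exfalso.
         assert (exp 0 < exp (h + ln (lam 0 beta 0))) by (apply exp_increasing; lra). rewrite exp_0 in H0; lra.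
       - rewrite <- exp_0. apply exp_le. lra. }
     rewrite <- E, <- Hsc. split; intros.
     - destruct (Rle_lt_dec (lam 0 beta h) 1); auto. destruct (H3 r). lra.
     - apply H4; auto. }
   split.
   + intros h Hh. apply Hiff; auto.
   + intros m Hm. apply Hm. apply Hiff. lra.
Qed.
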